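(* Assume parts (i), (iii), (iv), (v) of Assumption (S) (with $L_{f;\mathsf{x}}\ge1$), $\ell\ge2$, and $\ell h\,(1+L_{f;\mathsf{x}}+g_{\max}^2L_{\mathsf{sc},*})\le1$. Then there is an absolute constant $C$ such that for every $k\in\{0,1,\dots,T/h\}$, $$\mathbb{E}\|\widetilde{x}_{kh}\|^2\le C\exp(CL_{f;\mathsf{x}}^2T)\Big(\mathbb{E}\|\widetilde{x}_T\|^2+R^2+\ell^2h^2L_{f;\mathsf{t}}^2+g_{\max}^4\max_{k'\in\{0,\dots,T/h\}}\mathbb{E}\|\nabla\ln q_{k'h}(\widetilde{x}_{k'h})\|^2\Big).$$
   Context: Forward process: $dx_t=f_t(x_t)\,dt+g(t)\,dW_t$, $x_0\sim q$, on $\mathbb{R}^d$ with $g(t)>0$; $q_t$ is the law of $x_t$ (smooth positive density), $T>0$, $q^\leftarrow_t\triangleq q_{T-t}$. Assumption (S) parts: (i) $f_t(x)$ is $L_{f;\mathsf{t}}$-Lipschitz in $t$ and $L_{f;\mathsf{x}}$-Lipschitz in $x$; (iii) $\|f_t(0)\|\le R$; (iv) $g(t)\le g_{\max}$; (v) $\nabla\ln q^\leftarrow_t$ is $L_{\mathsf{sc},t}$-Lipschitz, $L_{\mathsf{sc},*}=\sup_tL_{\mathsf{sc},t}$. Restoration operator: $R_{t\to s}(x)\triangleq x-(t-s)f_t(x)+(t-s)g(t)^2\nabla\ln q_t(x)$. Degradation operator: $D^\gamma_{s\to t}(x)\triangleq x+(t-s)f_s(x)+g(s)\sqrt{t-s}\,\gamma$.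 Sampler: $h>0$ with $T/h\in\mathbb{N}$, $\ell\in\mathbb{N}$; draw $\widetilde{x}_T\sim q_T$; for $k=T/h,\dots,1$: if $k\ge\ell$, $z=R_{kh\to(k-\ell)h}(\widetilde{x}_{kh})$, $\gamma=(\widetilde{x}_{kh}-z-\ell hf_{(k-\ell)h}(z))/(g((k-\ell)h)\sqrt{\ell h})$, $\widetilde{x}_{(k-1)h}=D^\gamma_{(k-\ell)h\to(k-1)h}(z)$; if $k<\ell$, $\widetilde{x}_{(k-1)h}=\widetilde{x}_{kh}-h(f_{kh}(\widetilde{x}_{kh})-\tfrac12g(kh)^2\nabla\ln q_{kh}(\widetilde{x}_{kh}))$. *)

(* Defs.v *)
From HB Require Import structures.
From mathcomp Require Import all_boot all_order all_algebra.
From mathcomp Require Import all_classical all_reals all_analysis.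
Set Implicit Arguments. Unset Strict Implicit. Unset Printing Implicit Defensive.
Import Order.TTheory GRing.Theory Num.Theory.
Import numFieldNormedType.Exports.
Local Open Scope ring_scope.

Section Defs.
Variables (R : realType) (d : nat).
Notation vec := 'rV[R]_d.

Definition sqn (x : vec) : R := \sum_(i < d) (x 0 i) ^+ 2.
Definition enorm (x : vec) : R := Num.sqrt (sqn x).

Definition gradient (F : vec -> R) (x : vec) : vec :=
  \row_(i < d) ('D_(delta_mx 0 i) F x).

Definition score (q : R -> vec -> R) (t : R) (x : vec) : vec :=
  gradient (fun y => ln (q t y)) x.

Variables (f : R -> vec -> vec) (g : R -> R) (sc : R -> vec -> vec).

Definition restore (t s : R) (x : vec) : vec :=
  x - (t - s) *: f t x + ((t - s) * g t ^+ 2) *: sc t x.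

Definition degrade (s t : R) (gam x : vec) : vec :=
  x + (t - s) *: f s x + (g s * Num.sqrt (t - s)) *: gam.

(* one step of the sampler: from xtilde_{kh} to xtilde_{(k-1)h} *)
Definition sampler_step (h : R) (l k : nat) (x : vec) : vec :=
  if (l <= k)%N then
    let z := restore (k%:R * h) ((k - l)%:R * h) x in
    let gam := (g ((k - l)%:R * h) * Num.sqrt (l%:R * h))^-1 *:
               (x - z - (l%:R * h) *: f ((k - l)%:R * h) z) in
    degrade ((k - l)%:R * h) ((k.-1)%:R * h) gam z
  else x - h *: (f (k%:R * h) x - (2^-1 * g (k%:R * h) ^+ 2) *: sc (k%:R * h) x).

(* after j steps starting from xtilde_{Nh} = x0 one has xtilde_{(N-j)h} *)
Fixpoint sampler_iter (h : R) (l N : nat) (x0 : vec) (j : nat) : vec :=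
  match j with
  | 0 => x0
  | j'.+1 => sampler_step h l (N - j') (sampler_iter h l N x0 j')
  end.

(* xtilde_{kh} for 0 <= k <= N, where T = N h *)
Definition xtilde (h : R) (l N : nat) (x0 : vec) (k : nat) : vec :=
  sampler_iter h l N x0 (N - k).

End Defs.

(* Main.v *)
Require Import Defs.
From HB Require Import structures.
From mathcomp Require Import all_boot all_order all_algebra.
From mathcomp Require Import all_classical all_reals all_analysis.
From mathcomp Require Import ring lra measurable_realfun.
Import Order.TTheory GRing.Theory Num.Theory.
Import numFieldNormedType.Exports.
Local Open Scope ring_scope.
Set Implicit Arguments. Unset Strict Implicit. Unset Printing Implicit Defensive.


Lemma sqn_ge0 (R : realType) d (x : 'rV[R]_d) : 0 <= sqn x.
Proof. by apply: sumr_ge0 => i _; exact: sqr_ge0. Qed.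

Lemma sqnZ (R : realType) d (c : R) (x : 'rV[R]_d) : sqn (c *: x) = c ^+ 2 * sqn x.
Proof. rewrite /sqn mulr_sumr; apply: eq_bigr => i _; by rewrite mxE exprMn. Qed.

Lemma sqnN (R : realType) d (x : 'rV[R]_d) : sqn (- x) = sqn x.
Proof. rewrite /sqn; apply: eq_bigr => i _; by rewrite mxE sqrrN. Qed.

Lemma sqnB (R : realType) d (x y : 'rV[R]_d) : sqn (x - y) = sqn (y - x).
Proof. by rewrite -sqnN opprB. Qed.

Lemma sqnD_eps (R : realType) d (e : R) (x y : 'rV[R]_d) : 0 < e ->
  sqn (x + y) <= (1 + e) * sqn x + (1 + e^-1) * sqn y.
Proof.
move=> e0; rewrite /sqn !mulr_sumr -big_split /=; apply: ler_sum => i _.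
rewrite mxE; set a := x 0 i; set b := y 0 i.
have h : (1 + e) * a ^+ 2 + (1 + e^-1) * b ^+ 2 - (a + b) ^+ 2 = (e * a - b) ^+ 2 / e.
  by field; rewrite gt_eqF.
rewrite -subr_ge0 h; apply: divr_ge0; [exact: sqr_ge0 | exact: ltW].
Qed.

Lemma sqnD2 (R : realType) d (x y : 'rV[R]_d) : sqn (x + y) <= 2 * sqn x + 2 * sqn y.
Proof.
have := @sqnD_eps R d 1 x y ltr01; rewrite invr1.
by have -> : (1 + 1 : R) = 2 by [].
Qed.

Lemma enorm_sqn (R : realType) d (K : R) (x y : 'rV[R]_d) : 0 <= K ->
  enorm x <= K * enorm y -> sqn x <= K ^+ 2 * sqn y.
Proof.
rewrite /enorm => K0 h.
have e1 := sqr_sqrtr (sqn_ge0 x); have e2 := sqr_sqrtr (sqn_ge0 y).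
have s1 : 0 <= Num.sqrt (sqn x) by exact: sqrtr_ge0.
rewrite -e1 -e2; nra.
Qed.

Lemma sqn_coord (R : realType) d (x : 'rV[R]_d) i : (x 0 i) ^+ 2 <= sqn x.
Proof.
rewrite /sqn (bigD1 i) //= lerDl; apply: sumr_ge0 => j _; exact: sqr_ge0.
Qed.


Lemma step_eq (R : realType) d (f : R -> 'rV[R]_d -> 'rV[R]_d) g sc (h : R) (l k : nat) x :
  (l <= k)%N -> (1 <= l)%N ->
  let t := k%:R * h in let s := (k - l)%:R * h in
  let z := restore f g sc t s x in
  let a := g s * Num.sqrt ((k.-1)%:R * h - s) * (g s * Num.sqrt (l%:R * h))^-1 in
  sampler_step f g sc h l k x =
  x + h *: ((l%:R * (1 - a)) *: (g t ^+ 2 *: sc t x - f t x)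
            + ((l%:R - 1) - a * l%:R) *: f s z).
Proof.
move=> lk l1 t s z a.
have ets : t - s = l%:R * h by rewrite /t /s natrB //; ring.
have eds : (k.-1)%:R * h - s = (l%:R - 1) * h.
  rewrite /s natrB // -subn1 natrB; last by apply: leq_trans lk.
  ring.
rewrite /sampler_step lk /= -/t -/s -/z /degrade.
rewrite scalerA -/a eds.
apply/rowP => i; rewrite !mxE ets; ring.
Qed.

Lemma a_props (R : realType) (G h : R) (l : nat) (u : R) :
  0 < G -> 0 < h -> (2 <= l)%N -> u = (l%:R - 1) * h ->
  let a := G * Num.sqrt u * (G * Num.sqrt (l%:R * h))^-1 in
  (l%:R * (1 - a)) ^+ 2 <= 1 /\ ((l%:R - 1) - a * l%:R) ^+ 2 <= 1.
Proof.
move=> G0 h0 l2 eu a.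
have lR : (2 : R) <= l%:R by rewrite (ler_nat R 2 l).
have u0 : 0 <= u by rewrite eu; apply: mulr_ge0 => //; [lra | exact: ltW].
have lh0 : 0 < l%:R * h by apply: mulr_gt0 => //; lra.
have a0 : 0 <= a.
  rewrite /a; apply: mulr_ge0; first by apply: mulr_ge0; [exact: ltW | exact: sqrtr_ge0].
  by rewrite invr_ge0; apply: mulr_ge0; [exact: ltW | exact: sqrtr_ge0].
have a2 : a ^+ 2 * l%:R = l%:R - 1.
  rewrite /a !exprMn exprVn exprMn !sqr_sqrtr //; last exact: ltW.
  rewrite eu; field.
  apply/andP; split; first by rewrite gt_eqF.
  apply/andP; split; first by rewrite gt_eqF //; lra.
  by rewrite gt_eqF //; apply: exprn_gt0.
set b := a * l%:R.
have b2 : b ^+ 2 = l%:R * (l%:R - 1).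
  by rewrite -a2 /b; ring.
have b0 : 0 <= b by apply: mulr_ge0 => //; lra.
have bl : b <= l%:R by nra.
have bl1 : l%:R - 1 <= b by nra.
have e1 : l%:R * (1 - a) = l%:R - b by rewrite /b; ring.
rewrite e1; split; nra.
Qed.

Lemma f_bound (R : realType) d (F : 'rV[R]_d -> 'rV[R]_d) (L2 R2 : R) x :
  (forall x y, sqn (F x - F y) <= L2 * sqn (x - y)) -> sqn (F 0) <= R2 ->
  sqn (F x) <= 2 * L2 * sqn x + 2 * R2.
Proof.
move=> HL H0; have e : F x = (F x - F 0) + F 0 by rewrite subrK.
rewrite e; apply: le_trans (sqnD2 _ _) _.
have := HL x 0; rewrite subr0 => h1.
rewrite -mulrA; apply: lerD; rewrite ler_pM2l //; lra.
Qed.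

Lemma sqn_comb (R : realType) d (p r : R) (u v : 'rV[R]_d) :
  p ^+ 2 <= 1 -> r ^+ 2 <= 1 -> sqn (p *: u + r *: v) <= 2 * sqn u + 2 * sqn v.
Proof.
move=> hp hr; apply: le_trans (sqnD2 _ _) _; rewrite !sqnZ.
have := sqn_ge0 u; have := sqn_ge0 v; nra.
Qed.

Lemma sqn_sub2 (R : realType) d (u v : 'rV[R]_d) : sqn (u - v) <= 2 * sqn u + 2 * sqn v.
Proof. by apply: le_trans (sqnD2 _ _) _; rewrite sqnN. Qed.

Lemma step_bound (R : realType) d (f : R -> 'rV[R]_d -> 'rV[R]_d) g sc
  (h T L Rb gm : R) (l k : nat) x :
  0 < h -> h <= 1 -> (2 <= l)%N -> l%:R * h * L <= 1 -> 1 <= L -> k%:R * h <= T ->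
  (forall t x y, 0 <= t <= T -> sqn (f t x - f t y) <= L ^+ 2 * sqn (x - y)) ->
  (forall t, 0 <= t <= T -> sqn (f t 0) <= Rb ^+ 2) ->
  (forall t, 0 <= t <= T -> 0 < g t /\ g t <= gm) ->
  sqn (sampler_step f g sc h l k x) <=
  (1 + 97 * L ^+ 2 * h) * sqn x + 96 * h * (Rb ^+ 2 + gm ^+ 4 * sqn (sc (k%:R * h) x)).
Proof.
move=> h0 h1 l2 hlL L1 kT HF HR Hg.
set t := k%:R * h.
have t0 : 0 <= t <= T by rewrite kT andbT /t; apply: mulr_ge0 => //; exact: ltW.
have Rb2 : 0 <= Rb ^+ 2 by exact: sqr_ge0.
set X := sqn x; set Gs := gm ^+ 4 * sqn (sc t x).
have X0 : 0 <= X by exact: sqn_ge0.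
have G0 : 0 <= Gs.
  apply: mulr_ge0; last exact: sqn_ge0.
  have [g0 gm'] := Hg _ t0; apply: exprn_ge0; exact: le_trans (ltW g0) gm'.
have L2 : 1 <= L ^+ 2 by nra.
suff [v [ev hv]] : exists v, sampler_step f g sc h l k x = x + h *: v /\
    sqn v <= 48 * (L ^+ 2 * X + Rb ^+ 2 + Gs).
  rewrite ev; apply: le_trans (sqnD_eps _ _ h0) _; rewrite sqnZ -/X.
  have e : (1 + h^-1) * h ^+ 2 = h + h ^+ 2 by field; rewrite gt_eqF.
  rewrite mulrA e.
  have V0 := sqn_ge0 v.
  have hh : h + h ^+ 2 <= 2 * h by nra.
  have s1 : (h + h ^+ 2) * sqn v <= 2 * h * (48 * (L ^+ 2 * X + Rb ^+ 2 + Gs)).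
    apply: le_trans (_ : 2 * h * sqn v <= _); first by apply: ler_wpM2r.
    by apply: ler_wpM2l => //; lra.
  have s2 : 0 <= h * X * (L ^+ 2 - 1).
    by apply: mulr_ge0; [apply: mulr_ge0 => //; exact: ltW | lra].
  lra.
have gS : forall t', 0 <= t' <= T -> sqn (g t' ^+ 2 *: sc t' x) <= gm ^+ 4 * sqn (sc t' x).
  move=> t' ht'; rewrite sqnZ -exprM; apply: ler_wpM2r; first exact: sqn_ge0.
  have [g0 gm'] := Hg _ ht'.
  by apply: lerXn2r => //; rewrite nnegrE; [exact: ltW | exact: le_trans (ltW g0) gm'].
have hA : forall t', 0 <= t' <= T -> forall y, sqn (f t' y) <= 2 * L ^+ 2 * sqn y + 2 * Rb ^+ 2.
  by move=> t' ht' y; apply: f_bound; [move=> ? ?; exact: HF | exact: HR].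
case: (leqP l k) => lk.
- have l1 : (1 <= l)%N by apply: leq_trans l2.
  set s := (k - l)%:R * h.
  have s0 : 0 <= s <= T.
    apply/andP; split; first by apply: mulr_ge0 => //; exact: ltW.
    apply: le_trans kT; rewrite /s ler_wpM2r ?ler_nat ?leq_subr //; exact: ltW.
  have [gs0 _] := Hg _ s0.
  have eu : (k.-1)%:R * h - s = (l%:R - 1) * h.
    rewrite /s natrB // -subn1 natrB; last by apply: leq_trans lk.
    ring.
  have [hp hr] := a_props gs0 h0 l2 eu.
  eexists; split; first exact: step_eq.
  set z := restore f g sc t s x.
  set S := g t ^+ 2 *: sc t x; set A := f t x.
  have ets : t - s = l%:R * h by rewrite /t /s natrB //; ring.
  have ez : z = x + (l%:R * h) *: (S - A).
    by apply/rowP => i; rewrite /z /restore ets !mxE; ring.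
  apply: le_trans (sqn_comb _ _ hp hr) _.
  set D := sqn (S - A).
  have hS : sqn S <= Gs by exact: gS.
  have hA' : sqn A <= 2 * L ^+ 2 * X + 2 * Rb ^+ 2 by exact: hA.
  have hD : D <= 2 * sqn S + 2 * sqn A by exact: sqn_sub2.
  have hz : sqn z <= 2 * X + 2 * ((l%:R * h) ^+ 2 * D).
    by rewrite ez; apply: le_trans (sqnD2 _ _) _; rewrite sqnZ.
  have hB : sqn (f s z) <= 2 * L ^+ 2 * sqn z + 2 * Rb ^+ 2 by exact: hA.
  have D0 : 0 <= D by exact: sqn_ge0.
  have lam : (l%:R * h) ^+ 2 * L ^+ 2 <= 1.
    rewrite -exprMn; have : 0 <= l%:R * h * L.
      by apply: mulr_ge0; [apply: mulr_ge0 => //; exact: ltW | lra].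
    nra.
  have hLz : L ^+ 2 * sqn z <= 2 * L ^+ 2 * X + 2 * D.
    apply: le_trans (_ : L ^+ 2 * (2 * X + 2 * ((l%:R * h) ^+ 2 * D)) <= _).
      by apply: ler_wpM2l => //; lra.
    have : (l%:R * h) ^+ 2 * L ^+ 2 * D <= D.
      by rewrite -[leRHS]mul1r; apply: ler_wpM2r.
    move: ((l%:R * h) ^+ 2) lam => m _ HH.
    lra.
  have := sqn_ge0 S; have := sqn_ge0 A.
  nra.
- exists (2^-1 * g t ^+ 2 *: sc t x - f t x); split.
    rewrite /sampler_step leqNgt lk /= -/t; apply/rowP => i; rewrite !mxE; ring.
  apply: le_trans (sqn_sub2 _ _) _.
  rewrite -scalerA sqnZ.
  have := gS _ t0; have := hA _ t0 x; have := sqn_ge0 (g t ^+ 2 *: sc t x).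
  rewrite -/X -/Gs.
  have e4 : (2^-1 : R) ^+ 2 = 4^-1 by rewrite exprVn; congr (_^-1); rewrite expr2 -natrM.
  rewrite e4 => H1 H2 H3.
  have H4 : (4:R)^-1 <= 1 by rewrite invr_le1 // ?unitfE; lra.
  have H5 : (0:R) <= 4^-1 by rewrite invr_ge0.
  nra.
Qed.

Local Open Scope classical_set_scope.

Lemma meas_box d0 (Om : measurableType d0) (R : realType) d (Y : Om -> 'rV[R]_d)
  (lo hi : 'rV[R]_d) (s : seq 'I_d) :
  (forall i, measurable_fun setT (fun w => Y w 0 i)) ->
  measurable [set w | forall j, j \in s -> lo 0 j < Y w 0 j < hi 0 j].
Proof.
move=> mY; elim: s => [|j s IH].
  by rewrite (_ : [set w | _] = setT) //; apply/seteqP; split => w //= _ j.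
rewrite (_ : [set w | _] = ([set w | lo 0 j < Y w 0 j < hi 0 j] `&`
   [set w | forall j0, j0 \in s -> lo 0 j0 < Y w 0 j0 < hi 0 j0])); last first.
  apply/seteqP; split => w /=.
    by move=> H; split => [|j0 j0s]; apply: H; rewrite inE ?eqxx ?j0s ?orbT.
  by move=> [H1 H2] j0; rewrite inE => /orP[/eqP->|]; [exact: H1|exact: H2].
apply: measurableI => //.
have := mY j measurableT _ (measurable_itv `]lo 0 j, hi 0 j[%R); rewrite setTI.
by congr measurable; apply/seteqP; split => w /=; rewrite in_itv.
Qed.

Lemma meas_lip d0 (Om : measurableType d0) (R : realType) d (Y : Om -> 'rV[R]_d)
  (F : 'rV[R]_d -> R) (K : R) :
  0 <= K -> (forall x y, (F y - F x) ^+ 2 <= K * sqn (y - x)) ->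
  (forall i, measurable_fun setT (fun w => Y w 0 i)) ->
  measurable_fun setT (fun w => F (Y w)).
Proof.
move=> K0 HF mY; apply: (measurability _ (RGenOInfty.measurableE R)) => //.
move=> /= _ [_ [a ->] <-]; rewrite setTI preimage_itvoy.
pose Bx (lo hi : 'rV[rat]_d) := [set w | forall j, j \in enum 'I_d ->
   (\row_j0 (ratr (lo 0 j0) : R)) 0 j < Y w 0 j < (\row_j0 (ratr (hi 0 j0) : R)) 0 j].
pose P (lo hi : 'rV[rat]_d) := forall y : 'rV[R]_d,
   (forall j, (ratr (lo 0 j) : R) < y 0 j < ratr (hi 0 j)) -> a < F y.
pose B (n : nat) : set Om := match unpickle n with
  | Some p => if pselect (P p.1 p.2) then Bx p.1 p.2 else set0
  | None => set0 end.
have -> : [set x | a < F (Y x)] = \bigcup_n B n.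
  apply/seteqP; split => w /=; last first.
    move=> [n _]; rewrite /B; case: (unpickle n) => [[lo hi]|] //=.
    case: pselect => // HP /= Hw; apply: HP => j.
    by have := Hw j (mem_enum _ j); rewrite !mxE.
  move=> aw; set x := Y w.
  set e := F x - a; have e0 : 0 < e by rewrite /e subr_gt0.
  set M := K * d%:R + 1; have M1 : 1 <= M by rewrite /M lerDr; apply: mulr_ge0.
  set del := e / M.
  have del0 : 0 < del by apply: divr_gt0 => //; lra.
  have Hlo : forall j, exists q : rat, (ratr q : R) \in `]x 0 j - del, x 0 j[%R.
    by move=> j; apply: rat_in_itvoo; rewrite ltrBlDr ltrDl.
  have Hhi : forall j, exists q : rat, (ratr q : R) \in `]x 0 j, x 0 j + del[%R.
    by move=> j; apply: rat_in_itvoo; rewrite ltrDl.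
  have [flo Hflo] := choice Hlo; have [fhi Hfhi] := choice Hhi.
  pose lo := \row_j flo j; pose hi := \row_j fhi j.
  exists (pickle (lo, hi)); first by [].
  rewrite /B pickleK /=.
  case: (pselect (P lo hi)) => [_|nP] /=.
    move=> j _; rewrite !mxE; have := Hflo j; have := Hfhi j.
    by rewrite !in_itv /= => /andP[-> _] /andP[_ ->].
  exfalso; apply: nP => y Hy.
  have hs : sqn (y - x) <= d%:R * del ^+ 2.
    rewrite /sqn; apply: (@le_trans _ _ (\sum_(j < d) del ^+ 2)).
      apply: ler_sum => j _; rewrite mxE.
      have := Hy j; have := Hflo j; have := Hfhi j; rewrite !mxE !in_itv /=.
      move=> /andP[h1 h2] /andP[h3 h4] /andP[h5 h6]; nra.
    by rewrite sumr_const card_ord mulr_natl.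
  have hF := HF x y.
  have hKd : K * (d%:R * del ^+ 2) < e ^+ 2.
    have -> : K * (d%:R * del ^+ 2) = (M - 1) * e ^+ 2 / M ^+ 2.
      have eM : M - 1 = K * d%:R by rewrite /M; ring.
      by rewrite eM /del; field; rewrite gt_eqF //; lra.
    rewrite ltr_pdivrMr; last by apply: exprn_gt0; lra.
    have E0 : 0 < e ^+ 2 by apply: exprn_gt0.
    have MM : 0 <= M * (M - 1) by apply: mulr_ge0; lra.
    have : 0 < e ^+ 2 * (M * (M - 1) + 1) by apply: mulr_gt0 => //; lra.
    move=> HH; rewrite expr2; lra.
  have : (F y - F x) ^+ 2 < e ^+ 2.
    apply: le_lt_trans hF _; apply: le_lt_trans hKd.
    by apply: ler_wpM2l.
  rewrite /e; nra.
apply: bigcupT_measurable => n; rewrite /B.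
case: (unpickle n) => [[lo hi]|] //=.
case: (pselect (P lo hi)) => _ //=; exact: meas_box.
Qed.

Local Close Scope classical_set_scope.


Definition Lipq (R : realType) d (phi : 'rV[R]_d -> 'rV[R]_d) :=
  exists K : R, 0 <= K /\ forall x y, sqn (phi x - phi y) <= K * sqn (x - y).

Lemma LipI (R : realType) d : Lipq (fun x : 'rV[R]_d => x).
Proof. by exists 1; split => // x y; rewrite mul1r. Qed.

Lemma LipD (R : realType) d (p q : 'rV[R]_d -> 'rV[R]_d) :
  Lipq p -> Lipq q -> Lipq (fun x => p x + q x).
Proof.
move=> [K1 [K10 H1]] [K2 [K20 H2]]; exists (2 * K1 + 2 * K2); split; first lra.
move=> x y; have -> : p x + q x - (p y + q y) = (p x - p y) + (q x - q y).
  by rewrite opprD addrACA.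
apply: le_trans (sqnD2 _ _) _.
have := H1 x y; have := H2 x y; have := sqn_ge0 (x - y); nra.
Qed.

Lemma LipN (R : realType) d (p : 'rV[R]_d -> 'rV[R]_d) :
  Lipq p -> Lipq (fun x => - p x).
Proof. by move=> [K [K0 H]]; exists K; split => // x y; rewrite -opprD sqnN. Qed.

Lemma LipZ (R : realType) d (c : R) (p : 'rV[R]_d -> 'rV[R]_d) :
  Lipq p -> Lipq (fun x => c *: p x).
Proof.
move=> [K [K0 H]]; exists (c ^+ 2 * K); split; first by apply: mulr_ge0 => //; exact: sqr_ge0.
move=> x y; rewrite -scalerBr sqnZ -mulrA; apply: ler_wpM2l => //; exact: sqr_ge0.
Qed.

Lemma LipC (R : realType) d (p q : 'rV[R]_d -> 'rV[R]_d) :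
  Lipq p -> Lipq q -> Lipq (fun x => p (q x)).
Proof.
move=> [K1 [K10 H1]] [K2 [K20 H2]]; exists (K1 * K2); split; first exact: mulr_ge0.
move=> x y; apply: le_trans (H1 _ _) _; rewrite -mulrA; exact: ler_wpM2l.
Qed.

Lemma meas_coord d0 (Om : measurableType d0) (R : realType) d (Y : Om -> 'rV[R]_d)
  (p : 'rV[R]_d -> 'rV[R]_d) :
  Lipq p -> (forall i, measurable_fun setT (fun w => Y w 0 i)) ->
  forall i, measurable_fun setT (fun w => p (Y w) 0 i).
Proof.
move=> [K [K0 H]] mY i; apply: (@meas_lip _ _ _ _ Y (fun x => p x 0 i) K) => // x y.
apply: le_trans (H y x); have := sqn_coord (p y - p x) i; by rewrite !mxE.
Qed.

Lemma meas_sqn d0 (Om : measurableType d0) (R : realType) d (Y : Om -> 'rV[R]_d) :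
  (forall i, measurable_fun setT (fun w => Y w 0 i)) ->
  measurable_fun setT (fun w => sqn (Y w)).
Proof.
move=> mY; rewrite /sqn; apply: measurable_sum => i; exact: measurable_funX.
Qed.

Lemma Lip_step (R : realType) d (f : R -> 'rV[R]_d -> 'rV[R]_d) g sc
  (h T Lf Ls : R) (l k : nat) :
  0 <= h -> k%:R * h <= T ->
  (forall t x y, 0 <= t <= T -> sqn (f t x - f t y) <= Lf * sqn (x - y)) ->
  (forall t x y, 0 <= t <= T -> sqn (sc t x - sc t y) <= Ls * sqn (x - y)) ->
  0 <= Lf -> 0 <= Ls ->
  Lipq (sampler_step f g sc h l k).
Proof.
move=> h0 kT HF HS Lf0 Ls0.
have Lf1 : forall t, 0 <= t <= T -> forall q, Lipq q -> Lipq (fun x => f t (q x)).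
  by move=> t ht q Lq; apply: LipC => //; exists Lf; split => // x y; exact: HF.
have Ls1 : forall t, 0 <= t <= T -> forall q, Lipq q -> Lipq (fun x => sc t (q x)).
  by move=> t ht q Lq; apply: LipC => //; exists Ls; split => // x y; exact: HS.
have t0 : 0 <= k%:R * h <= T by rewrite kT andbT; exact: mulr_ge0.
have s0 : 0 <= (k - l)%:R * h <= T.
  rewrite mulr_ge0 //=; apply: le_trans kT; apply: ler_wpM2r => //.
  by rewrite ler_nat leq_subr.
rewrite /sampler_step /degrade /restore; case: (l <= k)%N => /=.
all: repeat first [ apply: LipD | apply: LipN | apply: LipZ | apply: LipI
  | apply: (Lf1 _ t0) | apply: (Lf1 _ s0) | apply: (Ls1 _ t0) ].
Qed.

Lemma Lip_iter (R : realType) d (f : R -> 'rV[R]_d -> 'rV[R]_d) g sc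
  (h T Lf Ls : R) (l N : nat) :
  0 <= h -> N%:R * h <= T ->
  (forall t x y, 0 <= t <= T -> sqn (f t x - f t y) <= Lf * sqn (x - y)) ->
  (forall t x y, 0 <= t <= T -> sqn (sc t x - sc t y) <= Ls * sqn (x - y)) ->
  0 <= Lf -> 0 <= Ls ->
  forall j, Lipq (fun x => sampler_iter f g sc h l N x j).
Proof.
move=> h0 NT HF HS Lf0 Ls0; elim=> [|j IH] /=; first exact: LipI.
apply: LipC IH; apply: (Lip_step _ _ h0 _ HF HS) => //.
apply: le_trans NT; apply: ler_wpM2r => //; by rewrite ler_nat leq_subr.
Qed.


Lemma iter_bound (R : realType) d (f : R -> 'rV[R]_d -> 'rV[R]_d) g sc
  (h T L Rb gm : R) (l N : nat) x0 :
  0 < h -> h <= 1 -> (2 <= l)%N -> l%:R * h * L <= 1 -> 1 <= L -> N%:R * h <= T ->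
  (forall t x y, 0 <= t <= T -> sqn (f t x - f t y) <= L ^+ 2 * sqn (x - y)) ->
  (forall t, 0 <= t <= T -> sqn (f t 0) <= Rb ^+ 2) ->
  (forall t, 0 <= t <= T -> 0 < g t /\ g t <= gm) ->
  forall m, sqn (sampler_iter f g sc h l N x0 m) <=
    (1 + 97 * L ^+ 2 * h) ^+ m * (sqn x0 + 96 * h * \sum_(i < m)
      (Rb ^+ 2 + gm ^+ 4 * sqn (sc ((N - i)%:R * h) (sampler_iter f g sc h l N x0 i)))).
Proof.
move=> h0 h1 l2 hlL L1 NT HF HR Hg.
set E := 1 + 97 * L ^+ 2 * h.
have E1 : 1 <= E by rewrite /E lerDl; apply: mulr_ge0; [nra | exact: ltW].
have gm0 : 0 <= gm.
  have t0 : (0:R) <= 0 <= T by apply/andP; split => //; apply: le_trans NT; apply: mulr_ge0 => //; exact: ltW.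
  by have [g0 gm'] := Hg _ t0; apply: le_trans gm'; exact: ltW.
have W0 : forall i, 0 <= Rb ^+ 2 + gm ^+ 4 * sqn (sc ((N - i)%:R * h) (sampler_iter f g sc h l N x0 i)).
  move=> i; apply: addr_ge0; first exact: sqr_ge0.
  apply: mulr_ge0; [exact: exprn_ge0 | exact: sqn_ge0].
elim=> [|m IH].
  by rewrite expr0 mul1r big_ord0 mulr0 addr0.
rewrite /= big_ord_recr /=.
set S := \sum_(i < m) _ ; set Wm := Rb ^+ 2 + _.
have st := @step_bound R d f g sc h T L Rb gm l (N - m) (sampler_iter f g sc h l N x0 m)
  h0 h1 l2 hlL L1.
have kT : (N - m)%:R * h <= T.
  by apply: le_trans NT; apply: ler_wpM2r; [exact: ltW | rewrite ler_nat leq_subr].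
have {}st := st kT HF HR Hg; rewrite -/E in st.
apply: le_trans st _.
set Y := sqn _ in IH *.
have S0 : 0 <= S by apply: sumr_ge0 => i _; exact: W0.
have Wm0 : 0 <= Wm by exact: W0.
have EE : 1 <= E ^+ m.+1 by apply: exprn_ege1.
have IH' : E * Y <= E ^+ m.+1 * (sqn x0 + 96 * h * S).
  by rewrite exprS -mulrA; apply: ler_wpM2l => //; lra.
have hW : 96 * h * Wm <= E ^+ m.+1 * (96 * h * Wm).
  rewrite -[leLHS]mul1r; apply: ler_wpM2r => //; apply: mulr_ge0 => //; apply: mulr_ge0; [lra| exact: ltW].
rewrite /Wm in hW *.
set WW := Rb ^+ 2 + _ in hW *.
have -> : E ^+ m.+1 * (sqn x0 + 96 * h * (S + WW)) =
   E ^+ m.+1 * (sqn x0 + 96 * h * S) + E ^+ m.+1 * (96 * h * WW) by ring.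
lra.
Qed.

Lemma path_bound (R : realType) d (f : R -> 'rV[R]_d -> 'rV[R]_d) g sc
  (h T L Rb gm : R) (l N k : nat) x0 :
  0 < h -> h <= 1 -> (2 <= l)%N -> l%:R * h * L <= 1 -> 1 <= L -> N%:R * h = T ->
  (forall t x y, 0 <= t <= T -> sqn (f t x - f t y) <= L ^+ 2 * sqn (x - y)) ->
  (forall t, 0 <= t <= T -> sqn (f t 0) <= Rb ^+ 2) ->
  (forall t, 0 <= t <= T -> 0 < g t /\ g t <= gm) ->
  (k <= N)%N ->
  sqn (xtilde f g sc h l N x0 k) <= expR (97 * L ^+ 2 * T) *
    (sqn x0 + 96 * h * \sum_(i < N.+1)
      (Rb ^+ 2 + gm ^+ 4 * sqn (sc (i%:R * h) (xtilde f g sc h l N x0 i)))).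
Proof.
move=> h0 h1 l2 hlL L1 NT HF HR Hg kN.
have NT' : N%:R * h <= T by rewrite NT.
have := iter_bound sc x0 h0 h1 l2 hlL L1 NT' HF HR Hg (N - k).
rewrite /xtilde.
pose W := fun i : nat => Rb ^+ 2 + gm ^+ 4 * sqn (sc ((N - i)%:R * h) (sampler_iter f g sc h l N x0 i)).
set W' := fun i : nat => Rb ^+ 2 + gm ^+ 4 * sqn (sc (i%:R * h) (sampler_iter f g sc h l N x0 (N - i))).
have gm0 : 0 <= gm.
  have t0 : (0:R) <= 0 <= T by apply/andP; split => //; rewrite -NT; apply: mulr_ge0 => //; exact: ltW.
  by have [g0 gm'] := Hg _ t0; apply: le_trans gm'; exact: ltW.
have W0 : forall i, 0 <= W i.
  move=> i; apply: addr_ge0; first exact: sqr_ge0.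
  apply: mulr_ge0; [exact: exprn_ge0 | exact: sqn_ge0].
have hS : \sum_(i < N - k) W i <= \sum_(i < N.+1) W' i.
  have -> : \sum_(i < N.+1) W' i = \sum_(i < N.+1) W i.
    rewrite (reindex_inj rev_ord_inj) /=; apply: eq_bigr => i _.
    rewrite /W' /W subSS subKn //.
    by rewrite -ltnS.
  rewrite (big_ord_widen N.+1 W (_ : (N - k <= N.+1)%N)); last by apply: leq_trans (leq_subr _ _) _.
  rewrite big_mkcond /=; apply: ler_sum => i _; case: ifP => // _; exact: W0.
move=> H; apply: le_trans H _.
set Y := sqn x0.
have Y0 : 0 <= Y by exact: sqn_ge0.
have S0 : 0 <= \sum_(i < N - k) W i by apply: sumr_ge0 => i _; exact: W0.
have a0 : 0 <= 97 * L ^+ 2 * h by apply: mulr_ge0; [nra | exact: ltW].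
have hE : (1 + 97 * L ^+ 2 * h) ^+ (N - k) <= expR (97 * L ^+ 2 * T).
  apply: le_trans (_ : expR (97 * L ^+ 2 * h) ^+ (N - k) <= _).
    apply: lerXn2r; rewrite ?nnegrE //; first lra; last exact: expR_ge1Dx.
  rewrite -expRM_natl; rewrite ler_expR -NT.
  have -> : (N - k)%:R * (97 * L ^+ 2 * h) = 97 * L ^+ 2 * ((N - k)%:R * h) by ring.
  apply: ler_wpM2l; first nra.
  by apply: ler_wpM2r; [exact: ltW | rewrite ler_nat leq_subr].
apply: ler_pM => //.
- by apply: exprn_ge0; lra.
- by apply: addr_ge0 => //; apply: mulr_ge0 => //; apply: mulr_ge0; [lra | exact: ltW].
- rewrite lerD2l; apply: ler_wpM2l => //; apply: mulr_ge0; [lra | exact: ltW].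
Qed.


Lemma integ d0 (Om : measurableType d0) (R : realType) (P : probability Om R)
 (N : nat) (U0 Uk : Om -> R) (G : 'I_N.+1 -> Om -> R) (K0 a b c : R) :
 measurable_fun setT U0 -> measurable_fun setT Uk -> (forall i, measurable_fun setT (G i)) ->
 (forall w, 0 <= U0 w) -> (forall w, 0 <= Uk w) -> (forall i w, 0 <= G i w) ->
 0 <= K0 -> 0 <= a -> 0 <= b -> 0 <= c ->
 (forall w, Uk w <= K0 * (U0 w + c * \sum_(i < N.+1) (a + b * G i w))) ->
 (\int[P]_w (Uk w)%:E <= K0%:E * (\int[P]_w (U0 w)%:E + (c * N.+1%:R)%:E *
     (a%:E + b%:E * \big[maxe/0%E]_(i < N.+1) \int[P]_w (G i w)%:E)))%E.
Proof.
move=> mU0 mUk mG U00 Uk0 G0 K00 a0 b0 c0 H.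
have mS : measurable_fun setT (fun w => \sum_(i < N.+1) (a + b * G i w)).
  apply: measurable_sum => i; apply: measurable_funD => //; apply: measurable_funM => //.
have mR : measurable_fun setT (fun w => K0 * (U0 w + c * \sum_(i < N.+1) (a + b * G i w))).
  apply: measurable_funM => //; apply: measurable_funD => //; apply: measurable_funM => //.
have S0 : forall w, 0 <= \sum_(i < N.+1) (a + b * G i w).
  by move=> w; apply: sumr_ge0 => i _; apply: addr_ge0 => //; apply: mulr_ge0.
apply: (@le_trans _ _ (\int[P]_w (K0 * (U0 w + c * \sum_(i < N.+1) (a + b * G i w)))%:E)%E).
  apply: ge0_le_integral => //.
  - by move=> w _; rewrite lee_fin.
  - exact/measurable_EFinP.
  - exact/measurable_EFinP.
  - by move=> w _; rewrite lee_fin.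
have -> : (\int[P]_w (K0 * (U0 w + c * \sum_(i < N.+1) (a + b * G i w)))%:E =
   \int[P]_w (K0%:E * ((U0 w)%:E + c%:E * \sum_(i < N.+1) (a%:E + b%:E * (G i w)%:E))))%E.
  apply: eq_integral => w _; rewrite EFinM EFinD EFinM sumEFin.
  by congr (_ * (_ + _ * _))%E; apply: eq_bigr => i _; rewrite EFinD EFinM.
have mGE : forall i, measurable_fun setT (fun w => (a%:E + b%:E * (G i w)%:E)%E).
  move=> i; apply/measurable_EFinP => /=.
  apply: measurable_funD => //; apply: measurable_funM => //.
have GE0 : forall i w, (0 <= a%:E + b%:E * (G i w)%:E)%E.
  by move=> i w; apply: adde_ge0; [rewrite lee_fin | apply: mule_ge0; rewrite lee_fin].
have mSE : measurable_fun setT (fun w => (\sum_(i < N.+1) (a%:E + b%:E * (G i w)%:E))%E).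
  exact: emeasurable_sum.
have SE0 : forall w, (0 <= \sum_(i < N.+1) (a%:E + b%:E * (G i w)%:E))%E.
  by move=> w; apply: sume_ge0 => i _.
rewrite ge0_integralZl //; last first.
  - move=> w _; apply: adde_ge0; rewrite ?lee_fin //; apply: mule_ge0 => //; rewrite lee_fin.
  - apply: emeasurable_funD; first exact/measurable_EFinP.
    apply: emeasurable_funM => //; exact: measurable_cst.
apply: lee_wpmul2l; first by rewrite lee_fin.
rewrite ge0_integralD //; last first.
  - apply: emeasurable_funM => //; exact: measurable_cst.
  - by move=> w _; apply: mule_ge0 => //; rewrite lee_fin.
  - exact/measurable_EFinP.
  - by move=> w _; rewrite lee_fin.
apply: leeD2l.
rewrite ge0_integralZl //; last first.
all: try by (move=> w _; exact: SE0) || rewrite lee_fin.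
rewrite ge0_integral_sum //; try by move=> i w _; exact: GE0.
rewrite EFinM -muleA; apply: lee_wpmul2l; first by rewrite lee_fin.
set M := \big[maxe/0%E]_(i < N.+1) _.
have M0 : (0 <= M)%E.
  rewrite /M; elim/big_ind: _ => //= [x y x0 y0|i _]; first by rewrite le_max x0.
  by apply: integral_ge0 => w _; rewrite lee_fin.
have HM : forall i : 'I_N.+1, (\int[P]_w ((a%:E + b%:E * (G i w)%:E)) <= a%:E + b%:E * M)%E.
  move=> i; rewrite ge0_integralD //; last first.
  - by apply: emeasurable_funM => //; apply/measurable_EFinP.
  - by move=> w _; apply: mule_ge0; rewrite lee_fin.
  rewrite integral_cst //.
  rewrite [X in (_ * X + _)%E](_ : _ = 1%E); last exact: probability_setT.
  rewrite mule1 ge0_integralZl //; last first.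
  - by move=> w _; rewrite lee_fin.
  - exact/measurable_EFinP.
  apply: leeD2l; apply: lee_wpmul2l; first by rewrite lee_fin.
  rewrite /M; apply: (@le_bigmax _ _ _ _ (fun i0 : 'I_N.+1 => \int[P]_w (G i0 w)%:E)%E).
apply: (@le_trans _ _ (\sum_(i < N.+1) (a%:E + b%:E * M))%E).
  by apply: lee_sum => i _; exact: HM.
have X0 : (0 <= a%:E + b%:E * M)%E by apply: adde_ge0; rewrite ?lee_fin //; apply: mule_ge0 => //; rewrite lee_fin.
move: (a%:E + b%:E * M)%E X0 => x x0.
elim: N.+1 => [|n IH]; first by rewrite big_ord0 mul0e.
rewrite big_ord_recr /= -natr1 EFinD ge0_muleDl ?lee_fin // mul1e.
by apply: leeD2r.
Qed.


Lemma final_cmp (R : realType) (K0 c' Ce a e : R) (I Q : \bar R) :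
  0 <= K0 -> 0 <= c' -> 0 <= a -> 0 <= e -> (0 <= I)%E -> (0 <= Q)%E ->
  K0 * (1 + c') <= Ce ->
  (K0%:E * (I + c'%:E * (a%:E + Q)) <= Ce%:E * (I + (a + e)%:E + Q))%E.
Proof.
move=> K00 c0 a0 e0 I0 Q0 HK.
have c1 : 0 <= 1 + c' by lra.
have aQ : (0 <= a%:E + Q)%E by apply: adde_ge0; rewrite ?lee_fin.
apply: (@le_trans _ _ (K0%:E * ((1 + c')%:E * (I + (a%:E + Q))))%E).
  apply: lee_wpmul2l; first by rewrite lee_fin.
  rewrite [X in (_ <= X)%E]ge0_muleDr //; apply: leeD.
    by rewrite -[leLHS]mul1e; apply: lee_wpmul2r => //; rewrite lee_fin; lra.
  by apply: lee_wpmul2r => //; rewrite lee_fin; lra.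
rewrite muleA -EFinM.
apply: lee_pmul => //.
- by rewrite lee_fin; apply: mulr_ge0.
- exact: adde_ge0.
- rewrite EFinD -addeA; apply: leeD2l; rewrite -addeA; apply: leeD2l.
  by apply: lee_paddl => //; rewrite lee_fin.
Qed.


Unset Implicit Arguments. Set Strict Implicit.
Local Open Scope ring_scope.

Theorem mainTheorem12 (R : realType) :
  exists C : R,
  forall (d : nat) (T h : R) (N l : nat)
    (f : R -> 'rV[R]_d -> 'rV[R]_d) (g : R -> R) (q : R -> 'rV[R]_d -> R)
    (Lft Lfx Lsc Rb gmax : R)
    (dO : measure_display) (Omega : measurableType dO) (P : probability Omega R)
    (X : Omega -> 'rV[R]_d),
  0 < T -> 0 < h -> N%:R * h = T ->
  (* (i) *)
  0 <= Lft -> 1 <= Lfx ->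
  (forall s t x, 0 <= s <= T -> 0 <= t <= T ->
     enorm (f t x - f s x) <= Lft * `|t - s|) ->
  (forall t x y, 0 <= t <= T -> enorm (f t x - f t y) <= Lfx * enorm (x - y)) ->
  (* (iii) *)
  (forall t, 0 <= t <= T -> enorm (f t 0) <= Rb) ->
  (* g > 0 and (iv) *)
  (forall t, 0 <= t <= T -> 0 < g t /\ g t <= gmax) ->
  (* q_t smooth positive density (positivity and differentiability used) *)
  (forall t x, 0 < q t x) -> (forall t x, differentiable (q t) x) ->
  (* (v) *)
  0 <= Lsc ->
  (forall t x y, 0 <= t <= T ->
     enorm (score q t x - score q t y) <= Lsc * enorm (x - y)) ->
  (* sampler parameters *)
  (2 <= l)%N ->
  l%:R * h * (1 + Lfx + gmax ^+ 2 * Lsc) <= 1 ->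
  (* initial point xtilde_T = X, a random vector *)
  (forall i, measurable_fun setT (fun w => X w 0 i)) ->
  forall k : nat, (k <= N)%N ->
    (\int[P]_w (sqn (xtilde f g (score q) h l N (X w) k))%:E <=
     (C * expR (C * Lfx ^+ 2 * T))%:E *
     (\int[P]_w (sqn (X w))%:E
      + (Rb ^+ 2 + l%:R ^+ 2 * h ^+ 2 * Lft ^+ 2)%:E
      + (gmax ^+ 4)%:E *
        \big[maxe/0%E]_(k' < N.+1)
          \int[P]_w (sqn (score q (k'%:R * h)
                            (xtilde f g (score q) h l N (X w) k')))%:E))%E.
Proof.
exists 193.
move=> d T h N l f g q Lft Lfx Lsc Rb gmax dO Omega P X T0 h0 NT Lft0 L1 _ HFx HR Hg
  _ _ Lsc0 HS l2 hyp mX k kN.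
have lR : (2 : R) <= l%:R by rewrite (ler_nat R 2 l).
have gm0 : 0 <= gmax.
  have t0 : (0:R) <= 0 <= T by apply/andP; split => //; exact: ltW.
  by have [g0 gm'] := Hg _ t0; apply: le_trans gm'; exact: ltW.
have gL : 0 <= gmax ^+ 2 * Lsc by apply: mulr_ge0 => //; exact: sqr_ge0.
have lh0 : 0 <= l%:R * h by apply: mulr_ge0; [lra | exact: ltW].
have hlL : l%:R * h * Lfx <= 1.
  apply: le_trans hyp; apply: ler_wpM2l => //; lra.
have h1 : h <= 1.
  have : l%:R * h * 1 <= 1 by apply: le_trans hlL; apply: ler_wpM2l.
  rewrite mulr1 => H; nra.
have HF' : forall t x y, 0 <= t <= T -> sqn (f t x - f t y) <= Lfx ^+ 2 * sqn (x - y).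
  by move=> t x y ht; apply: enorm_sqn; [lra | exact: HFx].
have HS' : forall t x y, 0 <= t <= T ->
    sqn (score q t x - score q t y) <= Lsc ^+ 2 * sqn (x - y).
  by move=> t x y ht; apply: enorm_sqn => //; exact: HS.
have HR' : forall t, 0 <= t <= T -> sqn (f t 0) <= Rb ^+ 2.
  move=> t ht; have := HR t ht; rewrite /enorm => H.
  have s0 := sqrtr_ge0 (sqn (f t 0)).
  rewrite -(sqr_sqrtr (sqn_ge0 (f t 0))); nra.
have Lip1 : forall j, Lipq (fun x => sampler_iter f g (score q) h l N x j).
  apply: (@Lip_iter R d f g (score q) h T (Lfx ^+ 2) (Lsc ^+ 2) l N (ltW h0) _ HF' HS'); [by rewrite NT | exact: sqr_ge0 | exact: sqr_ge0].
pose G := fun (i : 'I_N.+1) w =>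
  sqn (score q (i%:R * h) (xtilde f g (score q) h l N (X w) i)).
have := @integ _ _ _ P N (fun w => sqn (X w))
  (fun w => sqn (xtilde f g (score q) h l N (X w) k)) G
  (expR (97 * Lfx ^+ 2 * T)) (Rb ^+ 2) (gmax ^+ 4) (96 * h).
move=> /(_ (meas_sqn mX)).
move=> /(_ (@meas_sqn _ _ _ _ (fun w => xtilde f g (score q) h l N (X w) k) (meas_coord (Lip1 (N - k)%N) mX))).
have mG : forall i : 'I_N.+1, measurable_fun setT (G i).
  move=> i; apply: meas_sqn; apply: meas_coord; last exact: (meas_coord (Lip1 (N - i)%N) mX).
  exists (Lsc ^+ 2); split; first exact: sqr_ge0.
  move=> x y; apply: HS'; apply/andP; split; first by apply: mulr_ge0 => //; exact: ltW.
  rewrite -NT; apply: ler_wpM2r; [exact: ltW | rewrite ler_nat -ltnS; exact: ltn_ord].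
move=> /(_ mG (fun w => sqn_ge0 _) (fun w => sqn_ge0 _) (fun i w => sqn_ge0 _)).
move=> /(_ (expR_ge0 _) (sqr_ge0 _) (exprn_ge0 _ gm0)).
have c0 : 0 <= 96 * h by apply: mulr_ge0 => //; exact: ltW.
move=> /(_ c0).
have pb : forall w, sqn (xtilde f g (score q) h l N (X w) k) <=
    expR (97 * Lfx ^+ 2 * T) * (sqn (X w) +
     96 * h * \sum_(i < N.+1) (Rb ^+ 2 + gmax ^+ 4 * G i w)).
  move=> w; exact: (path_bound (score q) (X w) h0 h1 l2 hlL L1 NT HF' HR' Hg kN).
move=> /(_ pb) H; apply: le_trans H _.
apply: final_cmp.
- exact: expR_ge0.
- by apply: mulr_ge0 => //; exact: ltW.
- exact: sqr_ge0.
- by apply: mulr_ge0; [apply: mulr_ge0|]; exact: sqr_ge0.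
- by apply: integral_ge0 => w _; rewrite lee_fin; exact: sqn_ge0.
- apply: mule_ge0; first by rewrite lee_fin; exact: exprn_ge0.
  elim/big_ind: _ => //= [x y x0 y0|i _]; first by rewrite le_max x0.
  by apply: integral_ge0 => w _; rewrite lee_fin; exact: sqn_ge0.
have N1 : (1 <= N)%N.
  case: N NT {kN Lip1 G mG pb} => [|n] // NT; move: T0; rewrite -NT mul0r; lra.
have N1R : (1 : R) <= N%:R by rewrite ler1n.
have hT : h <= T by rewrite -NT; nra.
have e1 : 96 * h * N.+1%:R = 96 * (T + h) by rewrite -NT -natr1; ring.
rewrite e1.
have L2 : 1 <= Lfx ^+ 2 by nra.
have TL : T <= Lfx ^+ 2 * T by nra.
have E1 : T <= expR (Lfx ^+ 2 * T).
  apply: le_trans (_ : expR T <= _); first by have := expR_ge1Dx T; lra.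
  by rewrite ler_expR.
have E2 : 1 <= expR (Lfx ^+ 2 * T).
  have := expR_ge1Dx (Lfx ^+ 2 * T); lra.
have E3 : 1 + 96 * (T + h) <= 193 * expR (Lfx ^+ 2 * T) by lra.
apply: le_trans (_ : expR (97 * Lfx ^+ 2 * T) * (193 * expR (Lfx ^+ 2 * T)) <= _).
  by apply: ler_wpM2l => //; exact: expR_ge0.
rewrite mulrCA -expRD; apply: ler_wpM2l => //; rewrite ler_expR.
have : 0 <= Lfx ^+ 2 * T by nra.
lra.
Qed.
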